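(* Let $A,B,C\in\mathrm{End}(V)$. Then $A,B,C$ is an LR triple on $V$ if and only if: (i) each of $A,B,C$ is Nil; (ii) the flag $(A^{d-i}V)_{i=0}^d$ is raised by $B$ and by $C$; (iii) the flag $(B^{d-i}V)_{i=0}^d$ is raised by $C$ and by $A$; (iv) the flag $(C^{d-i}V)_{i=0}^d$ is raised by $A$ and by $B$.
   Context: Let $V$ be a vector space over a field $\mathbb F$ with $\dim V=d+1$. $X\in\mathrm{End}(V)$ is Nil if $X^{d+1}=0$ and $X^d\ne0$ (then $(X^{d-i}V)_{i=0}^d$ is a flag). A flag on $V$ is a sequence $(U_i)_{i=0}^d$ of subspaces with $\dim U_i=i+1$ and $U_{i-1}\subseteq U_i$. $X$ raises the flag if $U_i+XU_i=U_{i+1}$ for $0\le i\le d-1$. A decomposition of $V$ is a sequence $(V_i)_{i=0}^d$ of one-dimensional subspaces with $V=\bigoplus V_i$; $X$ lowers it if $XV_i=V_{i-1}$ ($1\le i\le d$), $XV_0=0$; raises it if $XV_i=V_{i+1}$ ($0\le i\le d-1$), $XV_d=0$. An ordered pair $X,Y$ is an LR pair if some decomposition is lowered by $X$ and raised by $Y$. An LR triple on $V$ is $A,B,C$ such that every ordered pair of distinct elements among $A,B,C$ is an LR pair on $V$. *)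

(* Defs.v *)
From HB Require Import structures.
From mathcomp Require Import all_boot all_order all_algebra.
Set Implicit Arguments. Unset Strict Implicit. Unset Printing Implicit Defensive.
Import GRing.Theory.
Local Open Scope ring_scope.
Local Open Scope vspace_scope.

Section LRDefs.
Variables (F : fieldType) (vT : vectType F).

Definition lpow (X : 'End(vT)) (n : nat) : 'End(vT) :=
  iter n (fun f => (X \o f)%VF) \1%VF.

(* X is Nil (relative to dim V = d+1): X^{d+1} = 0 and X^d <> 0 *)
Definition NilX (d : nat) (X : 'End(vT)) : Prop :=
  lpow X d.+1 = (0 : 'End(vT))%R /\ lpow X d <> (0 : 'End(vT))%R.

Definition flag_of (d : nat) (X : 'End(vT)) (i : nat) : {vspace vT} :=
  (lpow X (d - i) @: fullv)%VS.

Definition raises_flag (d : nat) (X : 'End(vT)) (U : nat -> {vspace vT}) : Prop :=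
  forall i, (i < d)%N -> (U i + X @: U i)%VS = U i.+1.

Definition is_decomposition (d : nat) (Vs : nat -> {vspace vT}) : Prop :=
  (forall i, (i <= d)%N -> \dim (Vs i) = 1%N) /\
  directv (\sum_(i < d.+1) Vs i) /\
  (\sum_(i < d.+1) Vs i)%VS = fullv.

Definition lowers_dec (d : nat) (X : 'End(vT)) (Vs : nat -> {vspace vT}) : Prop :=
  (forall i, (1 <= i <= d)%N -> (X @: Vs i)%VS = Vs i.-1) /\
  (X @: Vs 0%N)%VS = 0%VS.

Definition raises_dec (d : nat) (X : 'End(vT)) (Vs : nat -> {vspace vT}) : Prop :=
  (forall i, (i < d)%N -> (X @: Vs i)%VS = Vs i.+1) /\
  (X @: Vs d)%VS = 0%VS.

Definition LR_pair (d : nat) (X Y : 'End(vT)) : Prop :=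
  exists Vs : nat -> {vspace vT},
    is_decomposition d Vs /\ lowers_dec d X Vs /\ raises_dec d Y Vs.

Definition LR_triple (d : nat) (A B C : 'End(vT)) : Prop :=
  (LR_pair d A B /\ LR_pair d B A) /\ (LR_pair d A C /\ LR_pair d C A) /\
  (LR_pair d B C /\ LR_pair d C B).

End LRDefs.

(* Main.v *)
Require Import Defs.
From HB Require Import structures.
From mathcomp Require Import all_boot all_order all_algebra.
From mathcomp Require Import zify.
Set Implicit Arguments. Unset Strict Implicit. Unset Printing Implicit Defensive.
Import GRing.Theory.
Local Open Scope ring_scope.
Local Open Scope vspace_scope.

Lemma lpowS (F : fieldType) (vT : vectType F) (X : 'End(vT)) n :
  lpow X n.+1 = (X \o lpow X n)%VF.
Proof. by []. Qed.

Lemma lpow0E (F : fieldType) (vT : vectType F) (X : 'End(vT)) v :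
  lpow X 0 v = v.
Proof. by rewrite /lpow /= id_lfunE. Qed.

Lemma lpowSE (F : fieldType) (vT : vectType F) (X : 'End(vT)) n v :
  lpow X n.+1 v = X (lpow X n v).
Proof. by rewrite lpowS comp_lfunE. Qed.

Lemma lpowDE (F : fieldType) (vT : vectType F) (X : 'End(vT)) m n v :
  lpow X (m + n) v = lpow X m (lpow X n v).
Proof.
elim: m => [|m IH]; first by rewrite add0n lpow0E.
by rewrite addSn !lpowSE IH.
Qed.

Lemma lpowD (F : fieldType) (vT : vectType F) (X : 'End(vT)) m n :
  lpow X (m + n) = (lpow X m \o lpow X n)%VF.
Proof. by apply/lfunP => v; rewrite comp_lfunE lpowDE. Qed.

Lemma lpow0 (F : fieldType) (vT : vectType F) (X : 'End(vT)) : lpow X 0 = \1%VF.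
Proof. by []. Qed.

Lemma img_eq0 (F : fieldType) (vT : vectType F) (f : 'End(vT)) :
  f @: fullv = 0 -> f = 0%R.
Proof.
move=> h; apply/lfunP => v; rewrite zero_lfunE.
by apply/eqP; rewrite -memv0 -h memv_img ?memvf.
Qed.

Lemma nat_chain (f : nat -> nat) n :
  f 0%N = n -> f n = 0%N -> (forall k, (k < n)%N -> (f k.+1 < f k)%N) ->
  forall k, (k <= n)%N -> f k = (n - k)%N.
Proof.
move=> f0 fn fS.
have up : forall k, (k <= n)%N -> (f k <= n - k)%N.
  elim=> [|k IH] hk; first by rewrite f0 subn0.
  have := fS k hk; have := IH (ltnW hk); lia.
have down : forall j, (j <= n)%N -> (f (n - j) >= j)%N.
  elim=> [|j IH] hj; first by [].
  have := fS (n - j.+1)%N; have := IH (ltnW hj).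
  have -> : ((n - j.+1).+1 = n - j)%N by lia.
  move=> a b; have := b ltac:(lia); lia.
move=> k hk; have := up k hk; have := down (n - k)%N ltac:(lia).
have -> : (n - (n - k) = k)%N by lia.
lia.
Qed.

Lemma nil_dim (F : fieldType) (vT : vectType F) (d : nat)
  (hdim : \dim (fullv : {vspace vT}) = d.+1) (Z : 'End(vT)) :
  NilX d Z -> forall k, (k <= d.+1)%N -> \dim (lpow Z k @: fullv) = (d.+1 - k)%N.
Proof.
move=> [hZ1 hZd].
have sub : forall k, (lpow Z k.+1 @: fullv <= lpow Z k @: fullv).
  move=> k; rewrite -addn1 lpowD limg_comp; exact/limgS/subvf.
apply: (nat_chain (f := fun k => \dim (lpow Z k @: fullv))).
- by rewrite lpow0 lim1g.
- by rewrite hZ1 lim0g dimv0.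
move=> k hk; rewrite ltn_neqAle dimvS ?sub // andbT.
apply/negP => /eqP e; apply: hZd.
have E : lpow Z k.+1 @: fullv = lpow Z k @: fullv.
  by apply/eqP; rewrite eqEdim sub e leqnn.
apply: img_eq0.
have -> : d = ((d - k) + k)%N by lia.
rewrite lpowD limg_comp -E -limg_comp -lpowD.
have -> : (d - k + k.+1 = d.+1)%N by lia.
by rewrite hZ1 lim0g.
Qed.
Definition psum (F : fieldType) (vT : vectType F) (Vs : nat -> {vspace vT}) (i : nat)
  : {vspace vT} := (\sum_(j < i.+1) Vs j)%VS.

Lemma psum_mon (F : fieldType) (vT : vectType F) (Vs : nat -> {vspace vT}) i j :
  (j <= i)%N -> Vs j <= psum Vs i.
Proof. by move=> h; rewrite /psum (sumv_sup (Ordinal (h : (j < i.+1)%N))). Qed.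

Lemma psum_sub (F : fieldType) (vT : vectType F) (Vs : nat -> {vspace vT}) i W :
  (forall j, (j <= i)%N -> Vs j <= W) -> psum Vs i <= W.
Proof. by move=> h; apply/subv_sumP => j _; apply: h; rewrite -ltnS. Qed.

Lemma psum_monS (F : fieldType) (vT : vectType F) (Vs : nat -> {vspace vT}) i i' :
  (i <= i')%N -> psum Vs i <= psum Vs i'.
Proof. by move=> h; apply: psum_sub => j hj; apply: psum_mon; lia. Qed.

Lemma pair_fwd (F : fieldType) (vT : vectType F) (d : nat) (X Y : 'End(vT)) :
  LR_pair d X Y -> NilX d X /\ raises_flag d Y (flag_of d X).
Proof.
move=> [Vs [[hdim1 [_ hsum]] [[hXl hX0] [hYr hYd]]]].
have Xstep : forall i, (i < d)%N -> X @: psum Vs i.+1 = psum Vs i.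
  move=> i hi; rewrite /psum big_ord_recl limgD hX0 add0v limg_sum.
  apply: eq_bigr => j _; rewrite lift0 hXl //=.
  have := ltn_ord j; lia.
have flagE : forall k, (k <= d)%N -> lpow X k @: fullv = psum Vs (d - k).
  elim=> [|k IH] hk; first by rewrite lpow0 lim1g subn0.
  rewrite lpowS limg_comp IH ?(ltnW hk) //.
  have -> : (d - k = (d - k.+1).+1)%N by lia.
  by rewrite Xstep //; lia.
split.
  split.
    apply: img_eq0; rewrite lpowS limg_comp flagE // subnn /psum big_ord1.
    exact: hX0.
  move=> h; have := flagE d (leqnn d); rewrite h lim0g subnn /psum big_ord1.
  move=> e; have := hdim1 0%N isT; rewrite -e dimv0 => //.
move=> i hi; rewrite /flag_of !flagE ?leq_subr //.
have -> : (d - (d - i) = i)%N by lia.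
have -> : (d - (d - i.+1) = i.+1)%N by lia.
apply/eqP; rewrite eqEsubv; apply/andP; split.
  rewrite subv_add psum_monS //=.
  rewrite /psum limg_sum; apply/subv_sumP => j _.
  rewrite hYr; last by have := ltn_ord j; lia.
  apply: psum_mon; have := ltn_ord j; lia.
apply: psum_sub => j hj; case: j hj => [|j] hj.
  by apply: subv_trans (addvSl _ _); apply: psum_mon.
apply: subv_trans (addvSr _ _); rewrite -hYr; last by lia.
by apply: limgS; apply: psum_mon; lia.
Qed.
Lemma sum_le_n (f : nat -> nat) n :
  (forall j, (f j <= 1)%N) -> (\sum_(j < n) f j <= n)%N.
Proof.
move=> h1; elim: n => [|n IH]; first by rewrite big_ord0.
by rewrite big_ord_recr /= -addn1 leq_add.
Qed.

Lemma sum_le1_eq (f : nat -> nat) n :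
  (forall j, (f j <= 1)%N) -> (\sum_(j < n) f j)%N = n -> forall j, (j < n)%N -> f j = 1%N.
Proof.
move=> h1; elim: n => [|n IH] hs j hj //.
move: hs; rewrite big_ord_recr /=.
have hb : (\sum_(j < n) f j <= n)%N by apply: sum_le_n.
have := h1 n => hn hs.
have hs' : (\sum_(j < n) f j)%N = n.
  move: hn hs; case: (f n) => [|[|k]] //= _.
    by rewrite addn0 => e; move: hb; rewrite e ltnn.
  by rewrite addn1 => -[].
have [hjn|hnj] := ltnP j n; first exact: IH.
have -> : j = n by lia.
by move: hs; rewrite hs' -addn1 => /eqP; rewrite eqn_add2l => /eqP.
Qed.

Lemma sum_lines_dim (F : fieldType) (vT : vectType F) (f : nat -> vT) n :
  (\dim (\sum_(j < n) <[f j]>) <= n)%N.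
Proof.
apply: leq_trans (dimv_leq_sum _ _ _) _.
apply: (sum_le_n (f := fun j => \dim <[f j]>)) => j.
by rewrite dim_vline leq_b1.
Qed.

Lemma line0 (F : fieldType) (vT : vectType F) : <[0 : vT]> = 0.
Proof. by apply/eqP; rewrite -subv0 -memvE mem0v. Qed.

Lemma pair_bwd (F : fieldType) (vT : vectType F) (d : nat)
  (hdim : \dim (fullv : {vspace vT}) = d.+1) (X Y : 'End(vT)) :
  NilX d X -> NilX d Y -> raises_flag d Y (flag_of d X) ->
  raises_flag d X (flag_of d Y) -> LR_pair d X Y.
Proof.
move=> hXn hYn hYr hXr.
have [hX1 _] := hXn; have [hY1 _] := hYn.
set U := flag_of d X.
have dimU : forall i, (i <= d)%N -> \dim (U i) = i.+1.
  move=> i hi; rewrite /U /flag_of (nil_dim hdim hXn); lia.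
have dimYV : forall k, (k <= d.+1)%N -> \dim (lpow Y k @: fullv) = (d.+1 - k)%N.
  exact: nil_dim.
set u := vpick (U 0%N).
have hu : u \in U 0%N by apply: memv_pick.
have hu0 : u != 0%R.
  rewrite vpick0; apply/eqP => e; have := dimU 0%N isT; by rewrite e dimv0.
have U0E : U 0%N = <[u]>.
  apply/eqP; rewrite eq_sym eqEdim -memvE hu dim_vline hu0 dimU //.
set Vs := fun j => <[lpow Y j u]>.
have subU : forall i, (i <= d)%N -> U i <= psum Vs i.
  elim=> [|i IH] hi.
    by rewrite U0E; have := psum_mon Vs (leqnn 0); rewrite /Vs lpow0E.
  rewrite /U -hYr // -/U subv_add; apply/andP; split.
    by apply: subv_trans (IH (ltnW hi)) _; apply: psum_monS.
  apply: subv_trans (limgS _ (IH (ltnW hi))) _.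
  rewrite /psum limg_sum; apply/subv_sumP => j _.
  rewrite /Vs limg_line -lpowSE; apply: (psum_mon Vs).
  by have := ltn_ord j; lia.
have UE : forall i, (i <= d)%N -> U i = psum Vs i.
  move=> i hi; apply/eqP; rewrite eqEdim subU // dimU //.
  exact: (sum_lines_dim (fun j => lpow Y j u)).
have psumd : psum Vs d = fullv.
  by rewrite -UE // /U /flag_of subnn lpow0 lim1g.
have sumdim : (\sum_(j < d.+1) \dim (Vs j))%N = d.+1.
  apply/eqP; rewrite eqn_leq; apply/andP; split.
    apply: (sum_le_n (f := fun j => \dim (Vs j))) => j.
    by rewrite dim_vline leq_b1.
  apply: (leq_trans _ (dimv_leq_sum _ _ _)).
  by rewrite -/(psum Vs d) psumd hdim.
have dimVs : forall j, (j <= d)%N -> \dim (Vs j) = 1%N.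
  move=> j hj; apply: (sum_le1_eq (f := fun j => \dim (Vs j))) sumdim j hj.
  by move=> k; rewrite dim_vline leq_b1.
have Xu0 : X u = 0%R.
  move: hu; rewrite /U /flag_of subn0 => /memv_imgP [w _ ->].
  by rewrite -lpowSE hX1 zero_lfunE.
have F1 : forall m, (m < d)%N -> X (lpow Y m.+1 u) \in Vs m.
  move=> m hm.
  have inU : X (lpow Y m.+1 u) \in U m.
    have : lpow Y m.+1 u \in U m.+1.
      by rewrite UE // memvE; apply: (psum_mon Vs).
    rewrite /U /flag_of => /memv_imgP [w _ ->].
    rewrite -lpowSE.
    have -> : ((d - m.+1).+1 = d - m)%N by lia.
    exact/memv_img/memvf.
  have inW : X (lpow Y m.+1 u) \in lpow Y m @: fullv.
    have h := hXr (d - m.+1)%N ltac:(lia); rewrite /flag_of in h.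
    have e1 : (d - (d - m.+1) = m.+1)%N by lia.
    have e2 : (d - (d - m.+1).+1 = m)%N by lia.
    rewrite e1 e2 in h; rewrite -h; apply: (subvP (addvSr _ _)).
    exact/memv_img/memv_img/memvf.
  have capE : (U m :&: lpow Y m @: fullv) = Vs m.
    apply/eqP; rewrite eq_sym eqEdim subv_cap; apply/andP; split.
      rewrite UE ?(ltnW hm) // (psum_mon Vs) //=.
      by rewrite -memvE memv_img ?memvf.
    rewrite dimVs ?(ltnW hm) //.
    have hfull : U m + lpow Y m @: fullv = fullv.
      apply/eqP; rewrite eqEsubv subvf /= -{1}psumd.
      apply: psum_sub => j hj; case: (leqP j m) => hjm.
        apply: subv_trans (addvSl _ _); rewrite UE ?(ltnW hm) //.
        exact: (psum_mon Vs).
      apply: subv_trans (addvSr _ _).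
      have e : j = (m + (j - m))%N by lia.
            by rewrite /Vs e lpowDE -memvE memv_img ?memvf.
    have := dimv_sum_cap (U m) (lpow Y m @: fullv).
    rewrite hfull hdim dimU ?(ltnW hm) // dimYV; last by lia.
    lia.
  by rewrite -capE memv_cap inU inW.
have Xnz : forall m, (m < d)%N -> X (lpow Y m.+1 u) != 0%R.
  move=> m hm; apply/negP => /eqP h0.
  have e : U m = X @: U m.+1.
    rewrite /U /flag_of -limg_comp -lpowS.
    by have -> : ((d - m.+1).+1 = d - m)%N by lia.
  have sub : U m <= \sum_(j < m) Vs j.
    rewrite e UE // /psum limg_sum; apply/subv_sumP => j _.
    rewrite /Vs limg_line -memvE.
    case: j => [[|j] hj] /=.
      by rewrite id_lfunE Xu0 mem0v.
    case: (ltngtP j m) => hjm.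
    - have := F1 j ltac:(lia); move=> hs.
      rewrite memvE in hs; rewrite -lpowS; apply: subv_trans hs _.
      exact: (sumv_sup (Ordinal hjm)).
    - lia.
    - by rewrite hjm h0 mem0v.
  have := dimvS sub; rewrite dimU ?(ltnW hm) //.
  by apply/negP; rewrite -leqNgt; exact: (sum_lines_dim (fun j => lpow Y j u) m).
exists Vs; split; [split; [|split] | split; split].
- by move=> i hi; rewrite dimVs.
- by apply/directvP => /=; rewrite sumdim -/(psum Vs d) psumd hdim.
- exact: psumd.
- move=> i /andP [hi1 hid]; case: i hi1 hid => // m _ hm /=.
  have h1 := F1 m hm; have h2 := Xnz m hm.
  apply/eqP; rewrite /Vs limg_line eqEdim -memvE h1 /= dim_vline -lpowS [X in (_ <= X)%N]dim_vline h2.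
  by have := dimVs m (ltnW hm); rewrite /Vs dim_vline => ->.
- by rewrite /Vs limg_line lpow0E Xu0 line0.
- by move=> i hi; rewrite /Vs limg_line lpowSE.
- by rewrite /Vs limg_line -lpowSE hY1 zero_lfunE line0.
Qed.

Theorem theorem34p3 (F : fieldType) (vT : vectType F) (d : nat)
  (hdim : \dim (fullv : {vspace vT}) = d.+1) (A B C : 'End(vT)) :
  LR_triple d A B C <->
  [/\ NilX d A /\ NilX d B /\ NilX d C,
      raises_flag d B (flag_of d A) /\ raises_flag d C (flag_of d A),
      raises_flag d C (flag_of d B) /\ raises_flag d A (flag_of d B)
    & raises_flag d A (flag_of d C) /\ raises_flag d B (flag_of d C)].
Proof.
split.
  move=> [[AB BA] [[AC CA] [BC CB]]].
  have [nA rBA] := pair_fwd AB; have [nB rAB] := pair_fwd BA.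
  have [_ rCA] := pair_fwd AC; have [nC rAC] := pair_fwd CA.
  have [_ rCB] := pair_fwd BC; have [_ rBC] := pair_fwd CB.
  by split.
move=> [[nA [nB nC]] [rBA rCA] [rCB rAB] [rAC rBC]].
split; [split|split; split]; exact: pair_bwd.
Qed.
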